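(* Let $\pi_1,\pi_2\in\mathfrak{S}_m$ and suppose that no $i\in\{1,\dots,m\}$ is fixed by exactly one of $\pi_1,\pi_2$. Then $$d_{trans}(\pi_1,\pi_2)=N(G_{\pi_1},G_{\pi_2}^{-1})-A(G_{\pi_1},G_{\pi_2}^{-1}),$$ where $N(G_{\pi_1},G_{\pi_2}^{-1})$ is the number of non-isolated nodes of the multigraph $G_{\pi_1}+G_{\pi_2}^{-1}$ and $A(G_{\pi_1},G_{\pi_2}^{-1})$ is the number of alternating cycles in $G_{\pi_1}+G_{\pi_2}^{-1}$.
   Context: $\mathfrak{S}_m$ is the symmetric group on $\{1,\dots,m\}$; permutations are composed right to left. For $\pi_1,\pi_2\in\mathfrak{S}_m$, $d_{trans}(\pi_1,\pi_2)$ is the least number of transpositions whose product equals $\pi_2^{-1}\pi_1$ (zero if this is the identity). For $\pi\in\mathfrak{S}_m$, $G_\pi$ is the directed graph on $\{1,\dots,m\}$ with arc set $Q_\pi=\{(i,j): i\ne j,\ \pi(i)=j\}$, and $G_\pi^{-1}$ is the graph with all arcs reversed (arc set $Q_\pi^{-1}$). $G_{\pi_1}+G_{\pi_2}^{-1}$ is the directed multigraph on $\{1,\dots,m\}$ with red arcs $Q_{\pi_1}$ and blue arcs $Q_{\pi_2}^{-1}$ (a red and a blue arc with the same endpoints are distinct arcs). A node is isolated if it is incident to no arc. An alternating cycle is a closed directed trail (no arc repeated) in this multigraph in which consecutive arcs, including the last and the first, have different colors, considered up to cyclic rotation. *)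

(* Defs.v *)
From mathcomp Require Import all_boot fingroup perm.
From mathcomp Require Import ssralg ssrint.
Set Implicit Arguments. Unset Strict Implicit. Unset Printing Implicit Defensive.

(* The ground set {1,..,m} is represented by 'I_m
   (= {0,..,m-1}); S_m is 'S_m = {perm 'I_m}.
   MathComp composes permutations left to right: (s * t) x = t (s x).
   Hence the paper's right-to-left composition f o g is the MathComp
   product g * f. *)

Section Defs.
Variable m : nat.
Implicit Types (p : 'S_m) (i j : 'I_m).

Definition rl_comp (f g : 'S_m) : 'S_m := (g * f)%g.

Definition rl_prod_tperm (ts : seq ('I_m * 'I_m)) : 'S_m :=
  foldr (fun t acc => rl_comp (tperm t.1 t.2) acc) 1%g ts.

Definition is_trans_fact (s : 'S_m) (k : nat) : bool :=
  [exists ts : k.-tuple ('I_m * 'I_m),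
     all (fun t => t.1 != t.2) ts && (rl_prod_tperm ts == s)].

Lemma is_trans_fact_ex (s : 'S_m) : exists k, is_trans_fact s k.
Proof.
have [ts -> Hts] := prod_tpermP s.
exists (size (rev ts)); rewrite /is_trans_fact; apply/existsP.
exists (in_tuple (rev ts)) => /=.
apply/andP; split; first by rewrite all_rev.
apply/eqP; rewrite /rl_prod_tperm /rl_comp.
elim/last_ind: ts {Hts} => [|ts t IH] /=; first by rewrite big_nil.
by rewrite rev_rcons /= IH -cats1 big_cat big_seq1.
Qed.

Definition d_trans (p1 p2 : 'S_m) : nat :=
  ex_minn (is_trans_fact_ex (rl_comp p2^-1 p1)%g).

(* Arcs of the multigraph G_{p1} + G_{p2}^{-1}: (colour, tail, head),
   colour true = red, false = blue. *)
Definition arc := (bool * 'I_m * 'I_m)%type.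
Definition arc_col (a : arc) : bool := a.1.1.
Definition arc_tail (a : arc) : 'I_m := a.1.2.
Definition arc_head (a : arc) : 'I_m := a.2.

Definition inQ (p : 'S_m) i j : bool := (i != j) && (p i == j).

Definition is_arc (p1 p2 : 'S_m) (a : arc) : bool :=
  if arc_col a then inQ p1 (arc_tail a) (arc_head a)
  else inQ p2 (arc_head a) (arc_tail a).

Definition N_nonisolated (p1 p2 : 'S_m) : nat :=
  #|[set v : 'I_m | [exists a : arc,
       is_arc p1 p2 a && ((arc_tail a == v) || (arc_head a == v))]]|.

Definition is_alt_closed_trail (p1 p2 : 'S_m) (s : seq arc) : bool :=
  [&& s != [::], all (is_arc p1 p2) s, uniq s &
      path.cycle (fun a b => (arc_head a == arc_tail b) &&
                        (arc_col a != arc_col b)) s].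

(* all sequences of arcs of length at most #|arc| (a trail without repeated
   arcs never exceeds this length) *)
Definition short_seqs : seq (seq arc) :=
  flatten [seq [seq tval t | t <- enum {: n.-tuple arc}] | n <- iota 0 #|{: arc}|.+1].

Definition alt_trails (p1 p2 : 'S_m) : seq (seq arc) :=
  [seq s <- short_seqs | is_alt_closed_trail p1 p2 s].

Definition rot_equiv (s t : seq arc) : bool :=
  has (fun k => rot k s == t) (iota 0 (size s)).

(* A(G_{p1}, G_{p2}^{-1}) : number of alternating cycles, i.e. of
   alternating closed trails counted up to cyclic rotation (= number of
   rotation classes). *)
Definition A_altcycles (p1 p2 : 'S_m) : nat :=
  let T := alt_trails p1 p2 in
  size (undup [seq [seq u <- T | rot_equiv t u] | t <- T]).

End Defs.

(* Main.v *)
Require Import Defs.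
From mathcomp Require Import all_boot fingroup perm.
From mathcomp Require Import ssralg ssrint.
From mathcomp Require Import zify.

Section DT.
Variable m : nat.
Implicit Types (s : 'S_m).

Lemma porbit_fix s x : s x = x -> porbit s x = [set x].
Proof.
move=> sx; apply/setP => z; rewrite inE.
apply/porbitP/eqP => [[i ->]|->]; first by rewrite permX_fix.
by exists 0; rewrite expg0 perm1.
Qed.

Lemma card_porbits_le s : #|porbits s| <= m.
Proof. by rewrite /porbits (leq_trans (leq_imset_card _ _)) // card_ord. Qed.

Lemma card_porbits1 : #|porbits (1 : 'S_m)| = m.
Proof.
rewrite /porbits card_imset ?card_ord // => x y.
rewrite !porbit_fix ?perm1 //; exact: set1_inj.
Qed.

Lemma porbits_mulr s x y : #|porbits (s * tperm x y)%g| + (x \notin porbit s^-1 y).*2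
   = #|porbits s| + (x != y).
Proof.
rewrite -porbitsV invMg tpermV porbits_mul_tperm porbitsV //.
Qed.

Lemma rl_prod_cons (t : 'I_m * 'I_m) ts : rl_prod_tperm (t :: ts) = (rl_prod_tperm ts * tperm t.1 t.2)%g.
Proof. by []. Qed.

Lemma lower_bound (ts : seq ('I_m * 'I_m)) : all (fun t => t.1 != t.2) ts ->
  m <= #|porbits (rl_prod_tperm ts)| + size ts.
Proof.
elim: ts => [|t ts IH]; first by rewrite /= card_porbits1 addn0.
rewrite [all _ _]/= => /andP [Ht /IH {}IH]; rewrite rl_prod_cons [size _]/=.
have H := porbits_mulr (rl_prod_tperm ts) t.1 t.2; rewrite Ht in H.
set a := #|porbits (_ * _)%g| in H *; set b := #|porbits _| in H IH *; case: (_ \notin _) H => /= H; lia.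
Qed.

Lemma upper_bound k s : #|porbits s| + k = m -> is_trans_fact s k.
Proof.
have step s' : s' != 1%g -> exists x, #|porbits (s' * tperm x (s' x))%g| = (#|porbits s'|).+1
    /\ x != s' x.
  move=> ns; have [x Hx] : exists x, s' x != x.
    apply/existsP; apply: contraR ns => /existsPn Hx; apply/eqP/permP => x.
    by rewrite perm1; apply/eqP; move: (Hx x); rewrite negbK.
  exists x; have := porbits_mulr s' x (s' x).
  have E : porbit s' (s' x) = porbit s' x by rewrite -(porbit_perm s' 1 x) expg1.
  have M : s' x \in porbit s' x by rewrite -{1}(expg1 s') mem_porbit.
  rewrite porbitV porbit_sym M /= (eq_sym x) Hx addn1 => H.
  split => //.
  by move: H; rewrite /double /= addn0.
elim: k s => [|k IH] s Hs.
  have -> : s = 1%g.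
    apply/eqP; apply: contraT => /step [x [Hx _]].
    have := card_porbits_le (s * tperm x (s x)); rewrite Hx; lia.
  apply/existsP; exists [tuple]; by rewrite /= eqxx.
have ns : s != 1%g.
  by apply/eqP => E; move: Hs; rewrite E card_porbits1; lia.
have [x [Hx nx]] := step s ns.
have /existsP [ts /andP [Hall /eqP Hp]] := IH _ (etrans (congr1 (addn^~ k) Hx) (etrans (addSnnS _ _) Hs)).
apply/existsP; exists [tuple of (x, s x) :: ts] => /=.
rewrite nx Hall /= /rl_comp Hp -mulgA tperm2 mulg1 //.
Qed.

Lemma d_trans_card (p1 p2 : 'S_m) :
  d_trans p1 p2 + #|porbits (rl_comp p2^-1 p1)| = m.
Proof.
rewrite /d_trans; case: ex_minnP => k Hk Hmin.
set s := rl_comp _ _ in Hk Hmin *.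
have Hle := card_porbits_le s.
move/existsP: Hk => [ts /andP [Hall /eqP Hp]].
have := lower_bound ts Hall; rewrite Hp size_tuple => Hlb.
have := Hmin (m - #|porbits s|) (upper_bound _ _ (subnKC Hle)).
lia.
Qed.
End DT.

Section Comb.
Variables (m : nat) (p1 p2 : 'S_m).
Hypothesis H : forall i : 'I_m, (p1 i == i) = (p2 i == i).

Definition sig : 'S_m := (p1 * p2^-1)%g.
Definition Rv (v : 'I_m) : @Defs.arc m := (true, v, p1 v).
Definition nxt (a : @Defs.arc m) : @Defs.arc m :=
  let: (c, v, w) := a in
  if c then (false, w, (p2^-1)%g (p1 v)) else (true, w, p1 ((p2^-1)%g v)).
Definition er (a b : @Defs.arc m) := (arc_head a == arc_tail b) && (arc_col a != arc_col b).
Definition Mv : {set 'I_m} := [set v | p1 v != v].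

Lemma sigE v : sig v = (p2^-1)%g (p1 v).
Proof. by rewrite /sig permM. Qed.

Lemma nxt_inj : injective nxt.
Proof.
move=> [[c v w]] [[c' v' w']]; case: c; case: c' => //= [[]] E1 E2.
  by move/perm_inj/perm_inj: E2 => ->; rewrite E1.
by move/perm_inj/perm_inj: E2 => ->; rewrite E1.
Qed.

Lemma er_nxt a : er a (nxt a).
Proof. by case: a => [[[] v w]]; rewrite /er /= eqxx. Qed.

Lemma moved1 v : (p1 v != v) = (p2 v != v).
Proof. by rewrite H. Qed.

Lemma p2V_fix v : ((p2^-1)%g v == v) = (p2 v == v).
Proof.
apply/eqP/eqP => E.
  by rewrite -{1}E permKV.
by rewrite -{1}E permK.
Qed.

Lemma arc_next a b : is_arc p1 p2 a -> is_arc p1 p2 b -> er a b -> b = nxt a.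
Proof.
case: a => [[c v w]]; case: b => [[c' v' w']].
rewrite /is_arc /er /inQ /arc_col /arc_tail /arc_head /=.
case: c; case: c' => /andP [_ /eqP E1] /andP [_ /eqP E] /andP [/eqP E2 Hc] //; subst.   by rewrite E2 permK. by rewrite permK.
Qed.

Lemma nxt_arc a : is_arc p1 p2 a -> is_arc p1 p2 (nxt a).
Proof.
case: a => [[c v w]]; rewrite /is_arc /inQ /arc_col /arc_tail /arc_head /=.
case: c => /= /andP [nvw /eqP E]; subst.
  rewrite permKV eqxx andbT p2V_fix -moved1.
  by apply: contra nvw => /eqP /perm_inj ->.
by rewrite permK eqxx andbT eq_sym moved1 eq_sym.
Qed.

Lemma col_nxt a : arc_col (nxt a) = ~~ arc_col a.
Proof. by case: a => [[[] v w]]. Qed.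

Lemma col_iter n a : arc_col (iter n nxt a) = odd n (+) arc_col a.
Proof. elim: n => //= n IH; by rewrite col_nxt IH negb_add. Qed.

Lemma nxt2 v : nxt (nxt (Rv v)) = Rv (sig v).
Proof. by rewrite /= sigE. Qed.

Lemma iter2 k v : iter k.*2 nxt (Rv v) = Rv ((sig ^+ k)%g v).
Proof.
elim: k => [|k IH]; first by rewrite expg0 perm1.
rewrite doubleS /= IH expgSr permM sigE //.
Qed.

Lemma Rv_inj : injective Rv.
Proof. by move=> v w [] ->. Qed.

Lemma red_arc a : is_arc p1 p2 a -> arc_col a -> a = Rv (arc_tail a) /\ arc_tail a \in Mv.
Proof.
case: a => [[c v w]]; rewrite /is_arc /inQ /arc_col /arc_tail /arc_head /=.
case: c => // /andP [nvw /eqP E] _; subst w.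
by rewrite /Rv inE eq_sym.
Qed.

Lemma Rv_arc v : v \in Mv -> is_arc p1 p2 (Rv v).
Proof. by rewrite inE /is_arc /inQ /= eqxx andbT eq_sym. Qed.

Definition Ft (t : seq (@Defs.arc m)) : {set 'I_m} := [set z | Rv z \in t].

Lemma fconn_Rv v z : fconnect nxt (Rv v) (Rv z) = (z \in porbit sig v).
Proof.
apply/idP/porbitP => [/iter_findex | [i ->]].
  set n := findex _ _ _ => E.
  have : odd n = false.
    by have := col_iter n (Rv v); rewrite E /= addbT => /esym/negbRL; case: (odd n).
  move=> On; move: E; rewrite -(odd_double_half n) On add0n iter2.
  by move/Rv_inj => <-; exists n./2.
by rewrite -iter2 fconnect_iter.
Qed.

Lemma short_ok (t : seq (@Defs.arc m)) : uniq t -> t \in short_seqs m.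
Proof.
move=> Ut; have Hs : size t <= #|{: @Defs.arc m}|.
  by rewrite -(card_uniqP Ut) max_card.
apply/flattenP; exists [seq tval x | x <- enum {: (size t).-tuple (@Defs.arc m)}].
  by apply/mapP; exists (size t); rewrite // mem_iota.
by apply/mapP; exists (in_tuple t); rewrite ?mem_enum.
Qed.

Definition TT := alt_trails p1 p2.

Lemma trail_props t : t \in TT ->
  [/\ fcycle nxt t, uniq t, all (is_arc p1 p2) t & exists2 v, v \in Mv & Rv v \in t].
Proof.
rewrite mem_filter => /andP [/and4P [tn Ha Ut Hc] _].
have Hf : fcycle nxt t.
  apply: (sub_in_cycle (P := is_arc p1 p2) _ Ha Hc) => a b Pa Pb /= Hab.
  by rewrite (arc_next _ _ Pa Pb Hab) /= eqxx.
split => //.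
case: t tn Ha Ut Hc Hf => // a s _ Ha _ _ Hf.
have aT : a \in a :: s by rewrite mem_head.
pose b := if arc_col a then a else nxt a.
have bT : b \in a :: s by rewrite /b; case: ifP => // _; exact: (mem_fcycle Hf).
have bA : is_arc p1 p2 b.
  rewrite /b; case: ifP => _; first exact: (allP Ha).
  by apply: nxt_arc; exact: (allP Ha).
have bc : arc_col b by rewrite /b; case: ifP => // /negbT Hn; rewrite col_nxt.
have [E1 E2] := red_arc _ bA bc.
by exists (arc_tail b); rewrite // -E1.
Qed.

Lemma F_orbit t v : fcycle nxt t -> Rv v \in t -> Ft t = porbit sig v.
Proof.
move=> Hf Hv; apply/setP => z; rewrite inE -fconn_Rv.
by rewrite (fconnect_cycle Hf Hv).
Qed.

Lemma reqF t u : t \in TT -> u \in TT -> rot_equiv t u = (Ft t == Ft u).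
Proof.
move=> tT uT; apply/idP/eqP.
  case/hasP => k _ /eqP <-; apply/setP => z; by rewrite !inE mem_rot.
have [ft Ut At [v vM vt]] := trail_props _ tT.
have [fu Uu Au _] := trail_props _ uT.
move=> E.
have vu : Rv v \in u.
  have : v \in Ft u by rewrite -E (F_orbit _ _ ft vt) porbit_id.
  by rewrite inE.
case: u uT fu Uu Au vu E => [|y u'] uT fu Uu Au vu E.
  by rewrite in_nil in vu.
have yt : y \in t by rewrite -(fconnect_cycle ft vt) (fconnect_cycle fu vu) mem_head.
have E1 := orbitE ft Ut yt.
have E2 := orbitE fu Uu (mem_head y u').
rewrite /= eqxx rot0 in E2.
apply/hasP; exists (index y t); first by rewrite mem_iota add0n index_mem.
by rewrite -E1 E2.
Qed.

Lemma iter_arc n a : is_arc p1 p2 a -> is_arc p1 p2 (iter n nxt a).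
Proof. by move=> Ha; elim: n => //= n IH; apply: nxt_arc. Qed.

Lemma surj v : v \in Mv -> orbit nxt (Rv v) \in TT.
Proof.
move=> vM; rewrite mem_filter short_ok ?orbit_uniq // andbT.
have Hin : Rv v \in orbit nxt (Rv v) by rewrite -fconnect_orbit connect0.
apply/and4P; split.
- by apply: contraTneq Hin => ->.
- apply/allP => y; rewrite -fconnect_orbit => /iter_findex <-.
  by apply: iter_arc; apply: Rv_arc.
- exact: orbit_uniq.
- apply: (sub_cycle _ (cycle_orbit nxt_inj (Rv v))).
  by move=> a b /eqP <-; apply: er_nxt.
Qed.

Lemma size_undup_map (A B C : eqType) (s : seq A) (G : A -> B) (F : A -> C) :
  {in s &, forall x y, (G x == G y) = (F x == F y)} ->
  size (undup (map G s)) = size (undup (map F s)).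
Proof.
elim: s => //= x s IH Hs.
have Hs' : {in s &, forall x y, (G x == G y) = (F x == F y)}.
  by move=> a b aS bS; apply: Hs; rewrite inE ?aS ?bS orbT.
have -> : (G x \in map G s) = (F x \in map F s).
  apply/mapP/mapP => [[y yS E]|[y yS E]]; exists y => //; apply/eqP.
    by rewrite -Hs ?inE ?eqxx ?yS ?orbT // E.
  by rewrite Hs ?inE ?eqxx ?yS ?orbT // E.
by case: (_ \in _) => /=; rewrite IH.
Qed.

Definition Orb : {set {set 'I_m}} := [set porbit sig v | v in Mv].

Lemma A_card : A_altcycles p1 p2 = #|Orb|.
Proof.
rewrite /A_altcycles -/TT.
rewrite (@size_undup_map _ _ _ _ _ Ft); last first.
  move=> t u tT uT; apply/eqP/eqP => [E|E].
    have : t \in [seq w <- TT | rot_equiv t w] by rewrite mem_filter reqF ?eqxx ?tT.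
    by rewrite E mem_filter reqF // => /andP [/eqP -> _].
  by apply: eq_in_filter => w wT; rewrite !reqF // E.
rewrite -(card_uniqP (undup_uniq _)); apply: eq_card => X.
rewrite mem_undup; apply/mapP/imsetP => [[t tT ->]|[v vM ->]].
  have [ft _ _ [v vM vt]] := trail_props _ tT.
  by exists v; rewrite // (F_orbit _ _ ft vt).
exists (orbit nxt (Rv v)); first exact: surj.
rewrite (F_orbit _ v (cycle_orbit nxt_inj (Rv v))) //.
by rewrite -fconnect_orbit connect0.
Qed.

Lemma N_card : N_nonisolated p1 p2 = #|Mv|.
Proof.
apply: eq_card => v; rewrite !inE.
apply/existsP/idP => [[a /andP [Ha Hv]]|vM]; last first.
  by exists (Rv v); rewrite Rv_arc ?inE //= eqxx.
move: a Ha Hv => [[c x] y].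
rewrite /is_arc /inQ /arc_col /arc_tail /arc_head /=.
case: c => /andP [nxy /eqP E] /orP [] /eqP Ev; subst.
- by rewrite eq_sym.
- by apply: contra nxy => /eqP /perm_inj ->.
- by rewrite moved1; apply: contra nxy => /eqP /perm_inj ->.
- by rewrite moved1 eq_sym.
Qed.

Lemma sig_fix x : x \notin Mv -> sig x = x.
Proof.
rewrite inE negbK => /eqP E1; rewrite sigE E1.
have : p2 x == x by rewrite -H E1.
by rewrite -p2V_fix => /eqP.
Qed.

Lemma porbit_fix' (s : 'S_m) x : s x = x -> porbit s x = [set x].
Proof.
move=> sx; apply/setP => z; rewrite inE.
apply/porbitP/eqP => [[i ->]|->]; first by rewrite permX_fix.
by exists 0; rewrite expg0 perm1.
Qed.

Lemma porbits_card : #|porbits sig| = #|Orb| + #|~: Mv|.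
Proof.
have E : porbits sig = Orb :|: (porbit sig @: ~: Mv).
  apply/setP => X; rewrite inE; apply/imsetP/orP => [[x _ ->]|].
    case: (boolP (x \in Mv)) => xM; [left|right]; apply/imsetP; exists x => //.
    by rewrite inE.
  by case=> /imsetP [x _ ->]; exists x.
have I0 : Orb :&: (porbit sig @: ~: Mv) = set0.
  apply/setP => X; rewrite !inE; apply/andP => -[/imsetP [v vM ->] /imsetP [x xM]].
  rewrite inE in xM; rewrite (porbit_fix' _ _ (sig_fix _ xM)) => E'.
  have : v \in porbit sig v := porbit_id _ _.
  by rewrite E' inE => /eqP Evx; move: xM; rewrite -Evx vM.
have := cardsUI Orb (porbit sig @: ~: Mv); rewrite -E I0 cards0 addn0 => ->.
congr (_ + _); apply: card_in_imset => x y xM yM.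
rewrite inE in xM; rewrite inE in yM.
by rewrite !porbit_fix' ?sig_fix //; apply: set1_inj.
Qed.
End Comb.

Local Open Scope ring_scope.

Theorem proposition4 (m : nat) (p1 p2 : 'S_m) :
  (forall i : 'I_m, (p1 i == i) = (p2 i == i)) ->
  (d_trans p1 p2)%:Z = (N_nonisolated p1 p2)%:Z - (A_altcycles p1 p2)%:Z.
Proof.
move=> H.
have D := @d_trans_card m p1 p2.
have PC := @porbits_card _ _ _ H.
have C := cardsC (@Mv m p1).
rewrite card_ord in C.
rewrite (@N_card _ _ _ H) (@A_card _ _ _ H).
have Hd : (d_trans p1 p2 + #|@Orb m p1 p2| = #|@Mv m p1|)%N.
  move: D; rewrite [rl_comp _ _]/(sig m p1 p2) PC; lia.
by rewrite -Hd PoszD GRing.addrK.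
Qed.
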